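(* Let $K$ be a perfect field of characteristic $p>0$, let $R=K[x]$, and let $\mathcal{D}$ be the ring of $K$-linear differential operators on $R$. Let $M=R\oplus R$ be the $\mathcal{D}$-module defined as in the context with $g_r=x^{p^r+p^{2r}}$ for all $r\geq 0$. Then $M$ is not holonomic.
   Context: Differential operators: for $t\geq 0$ let $\partial_t=D_t:R\to R$ be the $K$-linear map sending $x^v$ to $\binom{v}{t}x^{v-t}$ (so $\partial_0$ is the identity). The ring $\mathcal{D}$ of $K$-linear differential operators on $R=K[x]$ has $K$-basis $\{x^i\partial_t : i,t\geq 0\}$, and as a $K$-algebra it is generated by $x$ and the operators $\partial_{p^k}$, $k\geq 0$. The Bernstein filtration $\mathcal{F}_0\subset\mathcal{F}_1\subset\cdots$ of $\mathcal{D}$ is given by $\mathcal{F}_s=$ the $K$-span of $\{x^i\partial_t : i+t\leq s\}$. A $K$-filtration of a (left) $\mathcal{D}$-module $N$ is an ascending chain of $K$-subspaces $N_0\subset N_1\subset\cdots$ with $\bigcup_i N_i=N$ and $\mathcal{F}_iN_j\subset N_{i+j}$ for all $i,j$. A $\mathcal{D}$-module $N$ is holonomic if it has a $K$-filtration $\{N_i\}$ and a constant $C$ with $\dim_K N_i\leq C i$ for all $i$ (this is the definition with $n=1$ variable). The module: given elements $g_r\in R^{p^r}=K[x^{p^r}]$ ($r\geq 0$), put $\sigma_k=-\sum_{r=0}^k g_r$. Let $M^{(i)}$ be the free $R^{p^i}$-module on $s_1^{(i)},s_2^{(i)}$ and $\Theta_i:M^{(i+1)}\to M^{(i)}$ the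 $R^{p^{i+1}}$-linear map with $\Theta_i(s_1^{(i+1)})=s_1^{(i)}$, $\Theta_i(s_2^{(i+1)})=g_is_1^{(i)}+s_2^{(i)}$. The induced maps give $R$-module isomorphisms $R\otimes_{R^{p^s}}M^{(s)}\cong M^{(0)}$, and the natural action of $\mathrm{End}_{R^{p^s}}(R)$ (the operators of order $<p^s$) on $R\otimes_{R^{p^s}}M^{(s)}$ transfers to $M^{(0)}$; these actions are compatible and give $M=M^{(0)}=R\oplus R$ a $\mathcal{D}$-module structure. Concretely, $x$ acts coordinatewise and for all $k\geq 0$ and $f_1,f_2\in R$, $\partial_{p^k}(f_1,f_2)=\big(\partial_{p^k}f_1+(\partial_{p^k}\sigma_k)f_2,\ \partial_{p^k}f_2\big)$. *)

(* Defs.v *)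
From HB Require Import structures.
From mathcomp Require Import all_boot all_order all_algebra.
Set Implicit Arguments. Unset Strict Implicit. Unset Printing Implicit Defensive.
Import GRing.Theory.
Local Open Scope ring_scope.

Section Dmod.
Variable K : fieldType.

Definition Mod := ({poly K} * {poly K})%type.

(* Hasse derivative partial_t : x^v |-> binom(v,t) x^(v-t); this is
   mathcomp's  f^`N(t)  (coefficients (f^`N(t))_i = f_(i+t) * 'C(i+t, t)). *)
Definition hasse (t : nat) (f : {poly K}) : {poly K} := f^`N(t).

Definition gpoly (p r : nat) : {poly K} := 'X^(p ^ r + p ^ (2 * r)).

Definition sigma (p k : nat) : {poly K} := - \sum_(r < k.+1) gpoly p r.

(* Action of partial_t on M, obtained from the identification
   M ~ R (x)_{R^{p^s}} M^(s) (with t < p^s).  Using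
   s = t+1 (t < p^(t+1)), the image of s_2^(s) in M^(0) is (-sigma_t, 1), and
   partial_t (f1, f2) = ( partial_t f1 + partial_t(sigma_t f2) - sigma_t partial_t f2,
                          partial_t f2 ). *)
Definition dact (p t : nat) (m : Mod) : Mod :=
  let s := sigma p t in
  (hasse t m.1 + (hasse t (s * m.2) - s * hasse t m.2), hasse t m.2).

Definition xact (a : nat) (m : Mod) : Mod := ('X^a * m.1, 'X^a * m.2).

Definition opact (p a t : nat) (m : Mod) : Mod := xact a (dact p t m).

Definition ksubspace (N : Mod -> Prop) : Prop :=
  N 0 /\ forall (c : K) (u v : Mod), N u -> N v -> N (c *: u + v).

Definition dim_le (N : Mod -> Prop) (d : nat) : Prop :=
  exists s : seq Mod, (size s <= d)%N /\
    forall v, N v -> exists c : 'I_(size s) -> K, v = \sum_(i < size s) c i *: s`_i.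

(* K-filtration of the D-module M (Bernstein filtration:
   F_i = K-span of x^a partial_t with a + t <= i). *)
Definition kfiltration (p : nat) (N : nat -> Mod -> Prop) : Prop :=
  [/\ forall i, ksubspace (N i),
      forall i m, N i m -> N i.+1 m,
      forall m, exists i, N i m &
      forall i j a t, (a + t <= i)%N -> forall m, N j m -> N (i + j)%N (opact p a t m)].

Definition holonomic (p : nat) : Prop :=
  exists N : nat -> Mod -> Prop, kfiltration p N /\
    exists C : nat, forall i, dim_le (N i) (C * i)%N.

End Dmod.

(* Main.v *)
Require Import Defs.
From mathcomp Require Import all_boot all_order all_algebra ring zify.
Import GRing.Theory.
Local Open Scope ring_scope.
Lemma coef_binom (K : fieldType) (m t : nat) :
  (('X + 1 : {poly K}) ^+ m)`_t = ('C(m, t))%:R.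
Proof.
rewrite exprD1n coef_sum.
under eq_bigr => i _ do rewrite coefMn coefXn.
case: (ltnP t m.+1) => ht.
  rewrite (bigD1 (Ordinal ht)) //= eqxx big1 ?addr0 //.
  move=> i hi; have /negbTE -> : t != i.
    by apply: contra hi => /eqP e; apply/eqP/val_inj.
  by rewrite mul0rn.
rewrite bin_small // big1 // => i _.
have : (i < t)%N by apply: (leq_trans (ltn_ord i)).
by move=> /ltn_eqF h; rewrite eq_sym h mul0rn.
Qed.

Lemma binE (K : fieldType) (p r t : nat) : prime p -> p \in [pchar K] ->
  ('C((p ^ r + p ^ (2 * r))%N, t))%:R =
  (t == 0)%:R + (t == (p ^ r)%N)%:R + (t == (p ^ (2 * r))%N)%:R + (t == (p ^ r + p ^ (2 * r))%N)%:R :> K.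
Proof.
move=> pp pK.
have pP : p \in [pchar {poly K}] by rewrite pchar_poly.
have nat1 : forall n, [pchar {poly K}].-nat (p ^ n)%N.
  move=> n; rewrite pnatX; case: n => [|n]; last by rewrite pnatE ?pP // orbT.
  by rewrite orbT.
rewrite -coef_binom exprD (exprDn_pchar _ _ (nat1 _)) (exprDn_pchar _ _ (nat1 _)).
rewrite !expr1n.
rewrite mulrDl mulrDr mulrDr mul1r mulr1 -exprD mulr1.
rewrite !coefD !coefXn coef1 /=.
by rewrite addrA; ring.
Qed.
Definition ee (p r : nat) : nat := (p ^ r + p ^ (2 * r))%N.

Lemma ee_mono p r k : (1 < p)%N -> (k < r)%N -> (ee p k < ee p r)%N.
Proof.
move=> p1 kr; rewrite /ee.
have h1 : (p ^ k < p ^ r)%N by rewrite ltn_exp2l.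
have h2 : (p ^ (2 * k) < p ^ (2 * r))%N by rewrite ltn_exp2l //; lia.
lia.
Qed.

Lemma pk_lt_ee p k : (1 < p)%N -> (0 < k)%N -> (p ^ k < ee p k)%N.
Proof.
move=> p1 k0; rewrite /ee -[X in (X < _)%N]addn0 ltn_add2l expn_gt0; lia.
Qed.

Lemma bin_kk (K : fieldType) p k : prime p -> p \in [pchar K] -> (0 < k)%N ->
  ('C(ee p k, p ^ k))%:R = 1 :> K.
Proof.
move=> pp pK k0; have p1 := prime_gt1 pp.
rewrite /ee binE // eqxx.
have -> : (p ^ k == 0)%N = false by rewrite eqn0Ngt expn_gt0 ltnW.
have -> : (p ^ k == p ^ (2 * k))%N = false by rewrite eqn_exp2l //; lia.
have -> : (p ^ k == p ^ k + p ^ (2 * k))%N = false.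
  by rewrite -[X in (X == _)%N]addn0 eqn_add2l eq_sym eqn0Ngt expn_gt0 ltnW.
by rewrite add0r addr0 addr0.
Qed.

Lemma bin_gt (K : fieldType) p k r : prime p -> p \in [pchar K] -> (k < r)%N ->
  ('C(ee p r, p ^ k))%:R = 0 :> K.
Proof.
move=> pp pK kr; have p1 := prime_gt1 pp.
rewrite /ee binE //.
have -> : (p ^ k == 0)%N = false by rewrite eqn0Ngt expn_gt0 ltnW.
have -> : (p ^ k == p ^ r)%N = false by rewrite eqn_exp2l //; lia.
have -> : (p ^ k == p ^ (2 * r))%N = false by rewrite eqn_exp2l //; lia.
have -> : (p ^ k == p ^ r + p ^ (2 * r))%N = false.
  apply/negbTE; rewrite neq_ltn; apply/orP; left.
  apply: (leq_trans _ (leq_addr _ _)); rewrite ltn_exp2l //.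
by rewrite !addr0.
Qed.

Lemma coef_sigma (K : fieldType) p k e :
  (sigma K p k)`_e = - \sum_(r < k.+1) (e == ee p r)%:R.
Proof.
rewrite /sigma coefN coef_sum; congr (- _); apply: eq_bigr => r _.
by rewrite /gpoly coefXn.
Qed.

Lemma coef_hasse_sigma (K : fieldType) p k j : prime p -> p \in [pchar K] -> (0 < k)%N ->
  (p ^ (2 * k) <= j)%N ->
  (hasse (p ^ k) (sigma K p (p ^ k)))`_j = - (j == p ^ (2 * k))%N%:R.
Proof.
move=> pp pK k0 hj; have p1 := prime_gt1 pp.
rewrite /hasse coef_nderivn coef_sigma mulNrn -sumrMnl; congr (- _).
have kt : (k < (p ^ k).+1)%N by apply: (leq_trans (ltn_expl k p1)).
rewrite (bigD1 (Ordinal kt)) //= big1 ?addr0.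
  rewrite /ee eqn_add2l; case: eqP => [->|_]; last by rewrite mul0rn.
  by rewrite mulr1n (@bin_kk K p k pp pK k0).
move=> r hr; case: eqP => [he|_]; last by rewrite mul0rn.
have rk : (k < r)%N.
  have : (nat_of_ord r != k) by apply: contra hr => /eqP e; apply/eqP/val_inj.
  rewrite neq_ltn => /orP[h|//].
  have := @ee_mono p k r p1 h; rewrite -he /ee; lia.
by rewrite mulr1n he (@bin_gt K p k r pp pK rk).
Qed.
Lemma fst_sum (K : fieldType) (I : Type) (r : seq I) (F : I -> Mod K) :
  (\sum_(i <- r) F i).1 = \sum_(i <- r) (F i).1.
Proof. by elim/big_rec2: _ => // i y1 y2 _ <-. Qed.

Theorem mainTheorem1 (K : fieldType) (p : nat) :
  prime p -> p \in [pchar K] ->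
  (forall a : K, exists b : K, b ^+ p = a) ->
  ~ holonomic K p.
Proof.
move=> pp pK _ [N [[hsub hmono hex hop] [C hdim]]].
have p1 := prime_gt1 pp.
have [j0 hj0] := hex ((0, 1) : Mod K).
set M := (2 * C + C * j0 + 1)%N.
set W := (p ^ (2 * M))%N.
set m := (M * W)%N.
set n := (2 * W + j0)%N.
have W0 : (0 < W)%N by rewrite expn_gt0 ltnW.
pose cc (l : 'I_m) := (l %/ W)%N.
pose aa (l : 'I_m) := (l %% W)%N.
pose kk l := (M + cc l)%N.
pose D l := (p ^ (2 * kk l) + aa l)%N.
pose v l := opact p (aa l) (p ^ kk l) ((0, 1) : Mod K).
have ccM : forall l, (cc l < M)%N.
  by move=> l; rewrite /cc ltn_divLR //; exact: (ltn_ord l).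
have aaW : forall l, (aa l < W)%N by move=> l; rewrite /aa ltn_pmod.
have kk0 : forall l, (0 < kk l)%N by move=> l; rewrite /kk; lia.
have vN : forall l, N n (v l).
  move=> l; apply: (hop (2 * W)%N j0) => //.
  have : (p ^ kk l <= W)%N by rewrite /W leq_pexp2l ?(ltnW p1) //; have := ccM l; rewrite /kk; lia.
  have := aaW l; lia.
have v1 : forall l, (v l).1 = 'X^(aa l) * hasse (p ^ kk l) (sigma K p (p ^ kk l)).
  move=> l; rewrite /v /opact /xact /dact /=; congr (_ * _).
  have h1 : hasse (p ^ kk l) (1 : {poly K}) = 0.
    rewrite /hasse -polyC1 nderivnC; case: eqP => // /eqP.
    by rewrite expn_eq0; case/andP => /eqP pz; move: p1; rewrite pz.
  have h0 : hasse (p ^ kk l) (0 : {poly K}) = 0.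
    rewrite /hasse -polyC0 nderivnC; case: eqP => //.
  by rewrite h0 h1 mulr0 subr0 mulr1 add0r.
have coefv : forall l q, (D l <= q)%N -> ((v l).1)`_q = - (q == D l)%:R.
  move=> l q hq; rewrite v1 coefXnM.
  have -> : (q < aa l)%N = false by apply/negbTE; rewrite -leqNgt; move: hq; rewrite /D; lia.
  rewrite coef_hasse_sigma //; last by move: hq; rewrite /D; lia.
  congr (- (_ %:R)); apply/eqP/eqP; rewrite /D; lia.
have Dmono : forall l j : 'I_m, (l < j)%N -> (D l < D j)%N.
  move=> l j lj.
  have el := divn_eq l W; have ej := divn_eq j W.
  have cle : (cc l <= cc j)%N by rewrite /cc leq_div2r // ltnW.
  rewrite leq_eqVlt in cle; case/orP: cle => [/eqP ce|clt].
    rewrite /D /kk ce ltn_add2l; move: el ej; rewrite -/(cc l) -/(cc j) -/(aa l) -/(aa j) ce.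
    lia.
  have hW : (W <= p ^ (2 * kk l))%N by rewrite /W leq_pexp2l ?(ltnW p1) //; rewrite /kk; lia.
  have hX : (p ^ (2 * kk l) * p ^ 2 <= p ^ (2 * kk j))%N.
    by rewrite -expnD leq_pexp2l ?(ltnW p1) //; rewrite /kk; lia.
  have hp2 : (2 <= p ^ 2)%N by rewrite expnS expn1; nia.
  have := aaW l; rewrite /D; nia.
pose A := \matrix_(l < m, j < m) ((v l).1)`_(D j).
have Aunit : A \in unitmx.
  have trA : is_trig_mx A.
    apply/is_trig_mxP => l j lj; rewrite mxE coefv ?(ltnW (Dmono _ _ lj)) //.
    by rewrite gtn_eqF ?Dmono // oppr0.
  rewrite unitmxE det_trig //.
  rewrite (eq_bigr (fun _ => -1)); last by move=> l _; rewrite mxE coefv // eqxx.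
  by rewrite prodr_const unitrX // unitrN1.
have [s [hs hspan]] := hdim n.
pose S := \matrix_(i < size s, j < m) ((s`_i).1)`_(D j).
have AS : (A <= S)%MS.
  apply/row_subP => l; have [c hc] := hspan _ (vN l); apply/submxP.
  exists (\row_i c i); apply/rowP => j.
  rewrite !mxE hc fst_sum coef_sum; apply: eq_bigr => i _.
  by rewrite !mxE /= coefZ.
have := mxrankS AS; rewrite mxrank_unit // => h.
have := leq_trans h (rank_leq_row S).
move=> hm; have := leq_trans hm hs; rewrite /m /M /n; nia.
Qed.
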